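(* Let $M$ be a simple restricted $\bar{\mathfrak D}$-module with central charge $c$ and level $\ell\ne0$. If $r_M=-\infty$, then $M=K(z)^{\bar{\mathfrak D}}$ for some $z\in\mathbb C$ (i.e. $K=M$ and the $\bar{\mathfrak D}$-action is the one defining $K(z)^{\bar{\mathfrak D}}$). Hence $c=1-\frac{12z^2}{\ell}$ and $K$ is a simple $\bar{\mathfrak h}$-module.
   Context: $\bar{\mathfrak D}$ has basis $\{d_m,h_r,\bar c_1,\bar c_2,\bar c_3:m,r\in\mathbb Z\}$, brackets $[d_m,d_n]=(m-n)d_{m+n}+\delta_{m+n,0}\frac{m^3-m}{12}\bar c_1$, $[d_m,h_r]=-rh_{m+r}+\delta_{m+r,0}(m^2+m)\bar c_2$, $[h_r,h_s]=r\delta_{r+s,0}\bar c_3$, $\bar c_i$ central; $\bar{\mathfrak h}=\mathrm{span}\{h_r,\bar c_3\}$. Restricted: each vector killed by $d_i,h_i$ for large $i$. Central charge $c$: $\bar c_1$ acts as $c$; level $\ell$: $\bar c_3$ acts as $\ell$. For $z\in\mathbb C$ and a restricted $\bar{\mathfrak h}$-module $H$ of level $\ell\ne0$, $H(z)^{\bar{\mathfrak D}}$ is $H$ with $\bar c_1\mapsto1-\frac{12z^2}{\ell}$, $\bar c_2\mapsto z$, $d_n\mapsto\bar L_n=\frac1{2\ell}\sum_{k\in\mathbb Z}{:}h_{n-k}h_k{:}+\frac{(n+1)z}{\ell}h_n$, where ${:}h_rh_s{:}=h_rh_s$ if $r\le s$, $=h_sh_r$ otherwise. Invariants: with $\bar{\mathfrak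 h}_{\ge r}=\bigoplus_{i\ge0}\mathbb Ch_{r+i}$: $M(r)=\mathrm{Ann}_M(\bar{\mathfrak h}_{\ge r})$, $n_M=\min\{r:M(r)\ne0\}$, $M_0=M(n_M)$. With $z_M$ the scalar of $\bar c_2$ on $M$, let $\bar L_n$ (with $z=z_M$) act on $M$ and $d'_n=d_n-\bar L_n$; $Y_n=\bigcap_{p\ge n}\mathrm{Ann}_{M_0}(d'_p)$, $r_M=\min\{n\in\mathbb Z:Y_n\ne0\}$, or $-\infty$ if all $Y_n\ne0$; $K_0=\bigcap_nY_n$ when $r_M=-\infty$; $K=U(\bar{\mathfrak h})K_0$. *)

(* Defs.v *)
From HB Require Import structures.
From mathcomp Require Import all_boot all_algebra.
From mathcomp Require Import reals Rstruct complex.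
Set Implicit Arguments. Unset Strict Implicit. Unset Printing Implicit Defensive.
Import GRing.Theory Num.Theory.
Local Open Scope ring_scope.

Definition C : numClosedFieldType := Rdefinitions.R[i].

Section Dbar.
Variable V : lmodType C.

(* A representation of the Lie algebra \bar{D} on V:
   d m, h r, c1, c2, c3 are the operators by which d_m, h_r, \bar c_i act. *)
Definition is_lin (f : V -> V) : Prop :=
  forall (a : C) (u v : V), f (a *: u + v) = a *: f u + f v.

Definition delta0 (m : int) : C := if m == 0 then 1 else 0.

Definition is_Dbar_module (d h : int -> V -> V) (c1 c2 c3 : V -> V) : Prop :=
  [/\ (forall m, is_lin (d m)) /\ (forall r, is_lin (h r)) /\
        is_lin c1 /\ is_lin c2 /\ is_lin c3,
      (forall m n v, d m (d n v) - d n (d m v) =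
          (m - n)%:~R *: d (m + n) v
          + (delta0 (m + n) * ((m ^+ 3 - m)%:~R / 12%:R)) *: c1 v),
      (forall m r v, d m (h r v) - h r (d m v) =
          (- r)%:~R *: h (m + r) v
          + (delta0 (m + r) * (m ^+ 2 + m)%:~R) *: c2 v),
      (forall r s v, h r (h s v) - h s (h r v) =
          (r%:~R * delta0 (r + s)) *: c3 v) &
      (forall c, c = c1 \/ c = c2 \/ c = c3 ->
         (forall m v, c (d m v) = d m (c v)) /\
         (forall r v, c (h r v) = h r (c v)) /\
         (forall v, c (c1 v) = c1 (c v)) /\
         (forall v, c (c2 v) = c2 (c v)) /\
         (forall v, c (c3 v) = c3 (c v)))].

Definition restricted (d h : int -> V -> V) : Prop :=
  forall v, exists N : int, forall i, N <= i -> d i v = 0 /\ h i v = 0.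

Definition Dbar_submodule (d h : int -> V -> V) (c1 c2 c3 : V -> V)
    (P : V -> Prop) : Prop :=
  [/\ P 0, (forall a u v, P u -> P v -> P (a *: u + v)),
      (forall m v, P v -> P (d m v)), (forall r v, P v -> P (h r v)) &
      (forall v, P v -> P (c1 v) /\ P (c2 v) /\ P (c3 v))].

Definition Dbar_simple (d h : int -> V -> V) (c1 c2 c3 : V -> V) : Prop :=
  (exists v : V, v != 0) /\
  forall P, Dbar_submodule d h c1 c2 c3 P ->
    (forall v, P v -> v = 0) \/ (forall v, P v).

Definition Mr (h : int -> V -> V) (r : int) (v : V) : Prop :=
  forall i, r <= i -> h i v = 0.

Definition is_nM (h : int -> V -> V) (n : int) : Prop :=
  (exists v, Mr h n v /\ v != 0) /\
  forall r, r < n -> forall v, Mr h r v -> v = 0.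

Definition nord (h : int -> V -> V) (n k : int) (v : V) : V :=
  let r := n - k in if r <= k then h r (h k v) else h k (h r v).

Definition nord_partial (h : int -> V -> V) (n : int) (N : nat) (v : V) : V :=
  \sum_(i < (2 * N).+1) nord h n (i%:Z - N%:Z) v.

(* On a restricted module the (formally infinite) sum is finite when applied
   to v; we express it as the eventual value of the symmetric partial sums. *)
Definition Lbar_rel (h : int -> V -> V) (ell z : C) (n : int) (v w : V) : Prop :=
  exists N0 : nat, forall N : nat, (N0 <= N)%N ->
    w = (2%:R * ell)^-1 *: nord_partial h n N v
        + ((n + 1)%:~R * z / ell) *: h n v.

(* Y_n = intersection over p >= n of Ann_{M_0}(d'_p), d'_p = d_p - \bar L_p,
   with M_0 = M(nM) and \bar L_p built with z = zM *)
Definition Yn (d h : int -> V -> V) (ell zM : C) (nM n : int) (v : V) : Prop :=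
  Mr h nM v /\ forall p, n <= p -> Lbar_rel h ell zM p v (d p v).

(* r_M = -infinity : all Y_n are nonzero *)
Definition rM_minus_infty (d h : int -> V -> V) (ell zM : C) (nM : int) : Prop :=
  forall n : int, exists v, Yn d h ell zM nM n v /\ v != 0.

Definition K0 (d h : int -> V -> V) (ell zM : C) (nM : int) (v : V) : Prop :=
  forall n, Yn d h ell zM nM n v.

(* K = U(\bar h) K_0 : the smallest subspace containing K_0 and stable under
   all h_r (\bar c_3 acts by a scalar). *)
Inductive inK (d h : int -> V -> V) (ell zM : C) (nM : int) : V -> Prop :=
  | inK_K0 w : K0 d h ell zM nM w -> inK d h ell zM nM w
  | inK_zero : inK d h ell zM nM 0
  | inK_h r v : inK d h ell zM nM v -> inK d h ell zM nM (h r v)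
  | inK_lin a u v : inK d h ell zM nM u -> inK d h ell zM nM v ->
                    inK d h ell zM nM (a *: u + v).

Definition hbar_submodule (h : int -> V -> V) (c3 : V -> V) (P : V -> Prop) : Prop :=
  [/\ P 0, (forall a u v, P u -> P v -> P (a *: u + v)),
      (forall r v, P v -> P (h r v)) & (forall v, P v -> P (c3 v))].

Definition hbar_simple (h : int -> V -> V) (c3 : V -> V) (K : V -> Prop) : Prop :=
  hbar_submodule h c3 K /\ (exists v, K v /\ v != 0) /\
  forall P, hbar_submodule h c3 P -> (forall v, P v -> K v) ->
    (forall v, P v -> v = 0) \/ (forall v, K v -> P v).

End Dbar.

(* Main.v *)
From mathcomp Require Import ssrAC.
Require Import Defs.
From HB Require Import structures.
From mathcomp Require Import all_boot all_algebra.
From mathcomp Require Import reals Rstruct complex.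
From mathcomp Require Import zify ring lra.
From Stdlib Require Import ClassicalEpsilon.
Import GRing.Theory Num.Theory.
Local Open Scope ring_scope.
Set Implicit Arguments. Unset Strict Implicit.
Section Lin.
Variable V : lmodType C.
Variable f : V -> V.
Hypothesis fl : is_lin f.
Lemma lin0 : f 0 = 0.
Proof.
have H := fl 1 0 0. rewrite !scale1r addr0 in H.
by apply: (addrI (f 0)); rewrite addr0 -H.
Qed.
Lemma linD u v : f (u + v) = f u + f v.
Proof. by have := fl 1 u v; rewrite !scale1r. Qed.
Lemma linZ a u : f (a *: u) = a *: f u.
Proof. by have := fl a u 0; rewrite !addr0 lin0 addr0. Qed.
Lemma linN u : f (- u) = - f u.
Proof. by rewrite -scaleN1r linZ scaleN1r. Qed.
Lemma linB u v : f (u - v) = f u - f v.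
Proof. by rewrite linD linN. Qed.
Lemma lin_sum n (F : 'I_n -> V) : f (\sum_(i < n) F i) = \sum_(i < n) f (F i).
Proof. exact: (big_morph f linD lin0). Qed.
End Lin.

Lemma lin_comp (V : lmodType C) (f g : V -> V) : is_lin f -> is_lin g -> is_lin (fun u => f (g u)).
Proof. by move=> hf hg a u v; rewrite hg hf. Qed.

Definition isum (M : zmodType) (a : int) (l : nat) (F : int -> M) : M :=
  \sum_(i < l) F (a + i%:Z).
Arguments isum {M}.

Section Isum.
Variable M : zmodType.
Implicit Types F G : int -> M.

Lemma isum0 a F : isum a 0 F = 0.
Proof. by rewrite /isum big_ord0. Qed.

Lemma isumS a l F : isum a l.+1 F = F a + isum (a + 1) l F.
Proof.
rewrite /isum big_ord_recl addr0; congr (_ + _).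
apply: eq_bigr => i _; congr F; rewrite /= /bump /=; lia.
Qed.

Lemma isum_split a l1 l2 F : isum a (l1 + l2) F = isum a l1 F + isum (a + l1%:Z) l2 F.
Proof.
elim: l1 a => [|l1 IH] a.
  by rewrite isum0 add0n add0r addr0.
rewrite addSn !isumS IH addrA.
by have -> : a + 1 + l1%:Z = a + l1.+1%:Z by lia.
Qed.

Lemma isum_ext a l F G : (forall k, a <= k -> k < a + l%:Z -> F k = G k) ->
  isum a l F = isum a l G.
Proof.
move=> H; apply: eq_bigr => i _; apply: H; have := ltn_ord i; lia.
Qed.

Lemma isum_add a l F G : isum a l (fun k => F k + G k) = isum a l F + isum a l G.
Proof. by rewrite /isum big_split. Qed.

Lemma isum_opp a l F : isum a l (fun k => - F k) = - isum a l F.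
Proof. by rewrite /isum sumrN. Qed.

Lemma isum_shift a l m F : isum a l (fun k => F (k + m)) = isum (a + m) l F.
Proof. apply: eq_bigr => i _; congr F; lia. Qed.

Lemma isum_zero a l F : (forall k, a <= k -> k < a + l%:Z -> F k = 0) -> isum a l F = 0.
Proof. move=> H; rewrite /isum big1 // => i _; apply: H; have := ltn_ord i; lia. Qed.

Lemma isum_delta a l x (g : M) : a <= x -> x < a + l%:Z ->
  isum a l (fun k => if k == x then g else 0) = g.
Proof.
elim: l a => [|l IH] a h1 h2; first lia.
rewrite isumS; have [->|ne] := eqVneq a x.
  rewrite isum_zero ?addr0 // => k k1 k2; case: eqP => // ?; lia.
rewrite add0r IH //; [lia|lia].
Qed.

Lemma isum_cut a l lo hi F :
  (forall k, (k < lo \/ hi <= k) -> F k = 0) -> a <= lo -> lo <= hi -> hi <= a + l%:Z ->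
  isum a l F = isum lo (absz (hi - lo)) F.
Proof.
move=> HF h1 h2 h3.
have E1 : Posz (absz (lo - a)) = lo - a by apply: gez0_abs; lia.
have E2 : Posz (absz (hi - lo)) = hi - lo by apply: gez0_abs; lia.
have E3 : Posz (absz ((a + l%:Z - hi)%R)) = a + l%:Z - hi by apply: gez0_abs; lia.
have El : l = (absz (lo - a) + (absz (hi - lo) + absz ((a + l%:Z - hi)%R)))%N.
  by apply/eqP; rewrite -eqz_nat !PoszD E1 E2 E3; apply/eqP; lia.
rewrite [in LHS]El isum_split isum_split.
have Z1 : isum a (absz (lo - a)) F = 0.
  by apply: isum_zero => k _ k2; apply: HF; left; lia.
have Z2 : isum (a + (absz (lo - a))%:Z + (absz (hi - lo))%:Z) (absz ((a + l%:Z - hi)%R)) F = 0.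
  by apply: isum_zero => k k1 _; apply: HF; right; lia.
rewrite Z1 Z2 add0r addr0.
by have -> : a + (absz (lo - a))%:Z = lo by lia.
Qed.

Lemma isum_win a l a' l' lo hi F :
  (forall k, (k < lo \/ hi <= k) -> F k = 0) -> lo <= hi ->
  a <= lo -> hi <= a + l%:Z -> a' <= lo -> hi <= a' + l'%:Z ->
  isum a l F = isum a' l' F.
Proof.
by move=> HF h0 h1 h2 h3 h4; rewrite (@isum_cut a l lo hi F HF h1 h0 h2) (@isum_cut a' l' lo hi F HF h3 h0 h4).
Qed.
End Isum.

Lemma isum_lin (V : lmodType C) (f : V -> V) a l F : is_lin f ->
  f (isum a l F) = isum a l (fun k => f (F k)).
Proof. by move=> fl; rewrite /isum (lin_sum fl). Qed.

Lemma isum_scale (V : lmodType C) (c : C) a l (F : int -> V) :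
  isum a l (fun k => c *: F k) = c *: isum a l F.
Proof. by rewrite /isum scaler_sumr. Qed.

Lemma isum_scalel (V : lmodType C) (v : V) a l (F : int -> C) :
  isum a l (fun k => F k *: v) = isum a l F *: v.
Proof. by rewrite /isum scaler_suml. Qed.

Lemma delta0N (e : int) : delta0 (- e) = delta0 e.
Proof. by rewrite /delta0 oppr_eq0. Qed.

Lemma delta0E (e : int) : delta0 e = if e == 0 then 1 else 0.
Proof. by []. Qed.

Lemma comb_final (V : lmodType C) (a b c d e f g p q r s t : C) (w X Y H : V) :
 c = q -> e = r -> f + g = s -> - a - b - d + p = t ->
 - (a *: w) - b *: w + (c *: X - d *: w) + e *: Y + f *: H + (g *: H + p *: w) =
 q *: X + r *: Y + s *: H + t *: w.
Proof.
move=> <- <- <- <-; rewrite !scalerDl !scaleNr.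
by rewrite !addrA [LHS](ACl (3*5*6*7*1*2*4*8)).
Qed.

Lemma isum_pick (M : zmodType) a l x (F : int -> M) : a <= x -> x < a + l%:Z ->
  (forall k, k != x -> F k = 0) -> isum a l F = F x.
Proof.
move=> h1 h2 HF; rewrite -(isum_delta (F x) h1 h2); apply: isum_ext => k _ _.
by case: eqVneq => [->|/HF].
Qed.

Lemma isum_cut2 (M : zmodType) a l lo l0 (F : int -> M) :
  (forall k, (k < lo \/ lo + l0%:Z <= k) -> F k = 0) -> a <= lo -> lo + l0%:Z <= a + l%:Z ->
  isum a l F = isum lo l0 F.
Proof.
move=> HF h1 h2; rewrite (@isum_cut _ a l lo (lo + l0%:Z) F HF h1) //; last lia.
by have -> : absz ((lo + l0%:Z - lo)%R) = l0 by apply/eqP; rewrite -eqz_nat gez0_abs; lia.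
Qed.

Section H.
Variable V : lmodType C.
Variable h : int -> V -> V.
Variables ell z : C.
Hypothesis hlin : forall r, is_lin (h r).
Hypothesis hh : forall r s v, h r (h s v) - h s (h r v) = (r%:~R * delta0 (r + s)) *: (ell *: v).
Hypothesis ell0 : ell != 0.
Variable bnd : V -> int.
Hypothesis bndP : forall u i, bnd u <= i -> h i u = 0.

Lemma h0 r : h r 0 = 0.
Proof. exact: lin0 (hlin r). Qed.

Lemma nord_zero n k u : (bnd u <= k \/ bnd u <= n - k) -> nord h n k u = 0.
Proof.
rewrite /nord; case: ifP => H Hb.
  by rewrite (bndP (i := k)) ?h0 //; lia.
by rewrite (bndP (i := n - k)) ?h0 //; lia.
Qed.

Definition thr n u : nat := (absz (bnd u) + absz n).+1.

Lemma nord_out n u k : (k < - (thr n u)%:Z \/ - (thr n u)%:Z + (2 * thr n u)%N%:Z <= k) ->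
  nord h n k u = 0.
Proof. move=> H; apply: nord_zero; rewrite /thr in H; lia. Qed.

Lemma np_isum n N u : nord_partial h n N u = isum (- N%:Z) (2 * N).+1 (fun k => nord h n k u).
Proof. rewrite /nord_partial /isum; apply: eq_bigr => i _; congr (nord h n _ u); lia. Qed.

Definition core n u := isum (- (thr n u)%:Z) (2 * thr n u) (fun k => nord h n k u).

Lemma np_stable n N u : (thr n u <= N)%N -> nord_partial h n N u = core n u.
Proof.
move=> HN; rewrite np_isum /core; apply: isum_cut2; first exact: nord_out.
  lia.
lia.
Qed.

Definition al (n : int) : C := (n + 1)%:~R * z / ell.
Definition Lf n N u := (2%:R * ell)^-1 *: nord_partial h n N u + al n *: h n u.
Definition Lb n u := Lf n (thr n u) u.

Lemma LbE n u N : (thr n u <= N)%N -> Lb n u = Lf n N u.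
Proof. by move=> HN; rewrite /Lb /Lf (np_stable HN) np_stable. Qed.

Lemma Lb_rel n u : Lbar_rel h ell z n u (Lb n u).
Proof. by exists (thr n u) => N HN; rewrite (LbE HN). Qed.

Lemma Lb_uniq n u w : Lbar_rel h ell z n u w -> w = Lb n u.
Proof.
case=> N0 H; rewrite (H (maxn N0 (thr n u))) ?leq_maxl //.
by rewrite (@LbE n u (maxn N0 (thr n u))) ?leq_maxr.
Qed.

Lemma nord_lin n k : is_lin (nord h n k).
Proof. move=> a u v; rewrite /nord; case: ifP => _; by rewrite !hlin. Qed.

Lemma np_lin n N : is_lin (nord_partial h n N).
Proof.
move=> a u v; rewrite /nord_partial scaler_sumr -big_split; apply: eq_bigr => i _.
exact: nord_lin.
Qed.

Lemma Lf_lin n N : is_lin (Lf n N).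
Proof.
move=> a u v; rewrite /Lf np_lin hlin !scalerDr !scalerA.
rewrite (mulrC _ a) (mulrC (al n) a) -!scalerA.
by rewrite addrACA.
Qed.

Lemma Lb_lin n : is_lin (Lb n).
Proof.
move=> a u v.
set N := maxn (thr n (a *: u + v)) (maxn (thr n u) (thr n v)).
rewrite (@LbE n (a *: u + v) N) ?leq_maxl // (@LbE n u N); last first.
  by rewrite /N leq_max leq_maxl orbT.
rewrite (@LbE n v N); last by rewrite /N leq_max leq_maxr orbT.
exact: Lf_lin.
Qed.

Lemma Lf_comm (T : V -> V) n N u : is_lin T -> (forall r w, T (h r w) = h r (T w)) ->
  T (Lf n N u) = Lf n N (T u).
Proof.
move=> Tl HT; rewrite /Lf (linD Tl) !(linZ Tl) HT !np_isum (isum_lin _ _ _ Tl).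
congr (_ *: _ + _); apply: isum_ext => k _ _; rewrite /nord; case: ifP => _; by rewrite !HT.
Qed.

Lemma Lb_comm (T : V -> V) n u : is_lin T -> (forall r w, T (h r w) = h r (T w)) ->
  T (Lb n u) = Lb n (T u).
Proof.
move=> Tl HT; set N := maxn (thr n u) (thr n (T u)).
rewrite (@LbE n u N) ?leq_maxl // (@LbE n (T u) N) ?leq_maxr //.
exact: Lf_comm.
Qed.

Lemma hhh a b r u : h a (h b (h r u)) - h r (h a (h b u)) =
  (b%:~R * delta0 (b + r) * ell) *: h a u + (a%:~R * delta0 (a + r) * ell) *: h b u.
Proof.
have E1 := hh b r u; have E2 := hh a r (h b u).
rewrite -[h b (h r u)](subrK (h r (h b u))) E1 (linD (hlin a)) !(linZ (hlin a)).
rewrite -[h a (h r (h b u))](subrK (h r (h a (h b u)))) E2.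
by rewrite !scalerA addrA addrK.
Qed.

Lemma nord_comm m k r u : nord h m k (h r u) - h r (nord h m k u) =
  (k%:~R * delta0 (k + r) * ell) *: h (m - k) u + ((m - k)%:~R * delta0 (m - k + r) * ell) *: h k u.
Proof. by rewrite /nord; case: ifP => _; rewrite hhh // addrC. Qed.

Lemma LbA m r u : Lb m (h r u) - h r (Lb m u) =
  (- r)%:~R *: h (m + r) u + (delta0 (m + r) * (m ^+ 2 + m)%:~R * z) *: u.
Proof.
set N := maxn (maxn (thr m (h r u)) (thr m u)) (absz r + absz ((m + r)%R)).
rewrite (@LbE m (h r u) N); last by rewrite /N; lia.
rewrite (@LbE m u N); last by rewrite /N; lia.
rewrite /Lf (linD (hlin r)) !(linZ (hlin r)) !np_isum (isum_lin _ _ _ (hlin r)).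
rewrite opprD addrACA -scalerBr -scalerBr -isum_opp -isum_add.
rewrite (isum_ext (G := fun k =>
   (k%:~R * delta0 (k + r) * ell) *: h (m - k) u + ((m - k)%:~R * delta0 (m - k + r) * ell) *: h k u));
  last by move=> k _ _; rewrite nord_comm.
rewrite isum_add (@isum_pick _ _ _ (- r)); first last.
- by move=> k hk; rewrite /delta0 ifN ?mulr0 ?mul0r ?scale0r //; apply/eqP; lia.
- by rewrite /N; lia.
- by rewrite /N; lia.
rewrite (@isum_pick _ _ _ (m + r)); first last.
- by move=> k hk; rewrite /delta0 ifN ?mulr0 ?mul0r ?scale0r //; apply/eqP; lia.
- by rewrite /N; lia.
- by rewrite /N; lia.
rewrite hh !scalerA.
have -> : m - - r = m + r by lia.
have -> : m - (m + r) = - r by lia.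
have -> : - r + r = 0 by lia.
rewrite -scalerDl scalerA.
congr (_ *: _ + _ *: _).
  rewrite /delta0 eqxx; field; done.
rewrite /al !(intrD, intrM, rmorphXn) /=; field; done.
Qed.

Definition gam (m : int) : C := (m ^+ 2 + m)%:~R * z.

Lemma nord_n0 n k u : n != 0 -> nord h n k u = h (n - k) (h k u).
Proof.
move=> n0; rewrite /nord; case: ifP => // _.
have := hh k (n - k) u; have -> : k + (n - k) = n by lia.
rewrite /delta0 ifN // mulr0 scale0r => /eqP; rewrite subr_eq0 => /eqP.
by [].
Qed.

Lemma LbA' m r u : Lb m (h r u) =
  h r (Lb m u) + ((- r)%:~R *: h (m + r) u + (delta0 (m + r) * gam m) *: u).
Proof. by rewrite /gam mulrA -LbA addrC subrK. Qed.

Lemma Lb_nord m n k w : n != 0 ->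
  Lb m (nord h n k w) - nord h n k (Lb m w) =
  (k - n)%:~R *: h (m + n - k) (h k w) + (- k)%:~R *: h (n - k) (h (m + k) w) +
  ((delta0 (m + n - k) * gam m) *: h k w + (delta0 (m + k) * gam m) *: h (n - k) w).
Proof.
move=> n0; rewrite !nord_n0 // LbA' LbA'; move: (Lb m w) => L.
rewrite !(linD (hlin _)) !(linZ (hlin _)).
have -> : m + (n - k) = m + n - k by lia.
have -> : - (n - k) = k - n by lia.
set A := h (n - k) (h k L).
set B1 := (k - n)%:~R *: _. set B2 := (delta0 _ * _) *: h k w.
set C1 := (- k)%:~R *: _. set C2 := (delta0 (m + k) * _) *: _.
rewrite (addrC A) -!addrA.
have -> : A + (B1 + (B2 - A)) = B1 + B2 by rewrite addrCA [A + _]addrC subrK.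
rewrite [RHS]addrCA; congr (_ + _).
by rewrite addrC -addrA.
Qed.

Lemma Sug_core m n p w N : n != 0 -> p = m + n ->
  (thr n w <= N)%N -> (thr n (Lb m w) <= N)%N -> (absz p <= N)%N -> (absz m <= N)%N ->
  Lb m (Lb n w) - Lb n (Lb m w) =
  (2%:R * ell)^-1 *: (isum (- N%:Z) (2 * N).+1 (fun k => (k - n)%:~R *: h (p - k) (h k w))
     + isum (- N%:Z) (2 * N).+1 (fun k => (- k)%:~R *: h (n - k) (h (m + k) w))
     + (2%:R * gam m) *: h p w)
  + al n *: ((- n)%:~R *: h p w + (delta0 p * gam m) *: w).
Proof.
move=> n0 -> h1 h2 h3 h4.
rewrite (LbE h1) (LbE h2) /Lf (linD (Lb_lin m)) !(linZ (Lb_lin m)).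
rewrite opprD addrACA -scalerBr -scalerBr LbA -mulrA.
congr (_ *: _ + _).
rewrite !np_isum (isum_lin _ _ _ (Lb_lin m)) -isum_opp.
rewrite -(isum_add _ _ (fun k => Lb m (nord h n k w))).
rewrite (@isum_ext _ _ _ (fun k => Lb m (nord h n k w) + - nord h n k (Lb m w)) (fun k =>
  (k - n)%:~R *: h (m + n - k) (h k w) + (- k)%:~R *: h (n - k) (h (m + k) w) +
  ((delta0 (m + n - k) * gam m) *: h k w + (delta0 (m + k) * gam m) *: h (n - k) w)));
  last by move=> k _ _; rewrite Lb_nord.
rewrite !isum_add; congr (_ + _).
rewrite (@isum_pick _ _ _ (m + n)); first last.
- by move=> k hk; rewrite /delta0 ifN ?mul0r ?scale0r //; apply/eqP; lia.
- lia.
- lia.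
rewrite (@isum_pick _ _ _ (- m)); first last.
- by move=> k hk; rewrite /delta0 ifN ?mul0r ?scale0r //; apply/eqP; lia.
- lia.
- lia.
have -> : m + n - (m + n) = 0 by lia.
have -> : m + - m = 0 by lia.
have -> : n - - m = m + n by lia.
by rewrite /delta0 eqxx !mul1r -scalerDl mulr_natl mulr2n.
Qed.



Lemma T_zero p k w : p != 0 -> (bnd w <= k \/ bnd w <= p - k) -> h (p - k) (h k w) = 0.
Proof. by move=> p0 H; rewrite -nord_n0 //; apply: nord_zero. Qed.

Lemma Sug_p m n w : n != 0 -> m + n != 0 ->
  Lb m (Lb n w) - Lb n (Lb m w) = (m - n)%:~R *: Lb (m + n) w.
Proof.
move=> n0 p0.
set p := m + n.
set B : nat := (absz (bnd w) + absz p).+1.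
set N := maxn (maxn (maxn (thr n w) (thr n (Lb m w))) (maxn (absz p) (absz m)))
              (maxn (thr p w) (B + absz m)).
rewrite (@Sug_core m n p w N) //; try by rewrite /N; lia.
rewrite (@LbE p w N); last by rewrite /N; lia.
rewrite /Lf np_isum.
set T := fun j => h (p - j) (h j w).
rewrite (@isum_ext _ _ _ (fun k => (- k)%:~R *: h (n - k) (h (m + k) w))
   (fun k => (fun j => (m - j)%:~R *: T j) (k + m))); last first.
  move=> k _ _ /=; rewrite /T.
  have -> : m - (k + m) = - k by lia.
  have -> : p - (k + m) = n - k by rewrite /p; lia.
  by rewrite (addrC k m).
rewrite (@isum_shift _ (- N%:Z) _ m (fun j => (m - j)%:~R *: T j)).
have HT : forall k, (k < - B%:Z \/ - B%:Z + (2 * B)%N%:Z <= k) -> T k = 0.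
  by move=> k Hk; rewrite /T T_zero //; rewrite /B in Hk; lia.
rewrite (@isum_cut2 _ (- N%:Z) _ (- B%:Z) (2 * B) (fun k => (k - n)%:~R *: T k)); first last.
- by rewrite /N; lia.
- by rewrite /N; lia.
- by move=> k /HT ->; rewrite scaler0.
rewrite (@isum_cut2 _ (- N%:Z + m) _ (- B%:Z) (2 * B) (fun j => (m - j)%:~R *: T j)); first last.
- by rewrite /N; lia.
- by rewrite /N; lia.
- by move=> k /HT ->; rewrite scaler0.
rewrite (@isum_ext _ _ _ (fun k => nord h p k w) T); last by move=> k _ _; rewrite nord_n0.
rewrite (@isum_cut2 _ (- N%:Z) _ (- B%:Z) (2 * B) T); first last.
- by rewrite /N; lia.
- by rewrite /N; lia.
- exact: HT.
rewrite -isum_add (@isum_ext _ _ _ _ (fun k => (m - n)%:~R *: T k)); last first.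
  by move=> k _ _; rewrite -scalerDl; congr (_ *: _); rewrite -intrD; congr intr; lia.
rewrite isum_scale.
set S := isum _ _ T.
rewrite /delta0 ifN // mul0r scale0r addr0.
rewrite !scalerDr !scalerA -addrA -scalerDl.
congr (_ *: _ + _ *: _).
  by rewrite mulrC.
rewrite /al /gam /p !(intrD, intrM, intrN, intrB, rmorphXn) /=; field; done.
Qed.

Lemma isum_mulr a l (F : int -> C) c : isum a l (fun k => F k * c) = isum a l F * c.
Proof. by rewrite /isum mulr_suml. Qed.

Lemma split_W (F : int -> V) K : isum (- (K.+2)%:Z) (2 * K.+2).+1 F =
  F (- (K.+2)%:Z) + F (- (K.+1)%:Z) + isum (- K%:Z) K F + isum 0 (K + 3) F.
Proof.
have -> : (2 * K.+2).+1 = (2 + (K + (K + 3)))%N by lia.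
rewrite isum_split isum_split !isumS isum0 addr0 !addrA.
congr (_ + F _ + isum _ _ _ + isum _ _ _); lia.
Qed.

Lemma split_W2 (F : int -> V) K : isum (- (K.+2)%:Z + 2) (2 * K.+2).+1 F =
  isum (- K%:Z) K F + isum 0 (K + 3) F + isum (K%:Z + 3) 2 F.
Proof.
have -> : (2 * K.+2).+1 = (K + ((K + 3) + 2))%N by lia.
have -> : - (K.+2)%:Z + 2 = - K%:Z by lia.
rewrite isum_split isum_split addrA.
have -> : - K%:Z + K%:Z = 0 by lia.
by have -> : 0 + (K + 3)%N%:Z = K%:Z + 3 by lia.
Qed.

Lemma isum_id K : isum (- K%:Z) K (fun k => k%:~R : C) = - (K%:R * (K%:R + 1) / 2%:R).
Proof.
elim: K => [|K IH]; first by rewrite isum0 mul0r mul0r oppr0.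
rewrite isumS; have -> : - (K.+1)%:Z + 1 = - K%:Z by lia.
rewrite IH; have -> : (- (K.+1)%:Z)%:~R = - (K%:R + 1) :> C.
  by rewrite intrN natr1.
by rewrite -natr1; field.
Qed.

Lemma comb_a (x y u : V) (a b c e : C) : a + b - c = e ->
  a *: u + b *: u + (x - c *: u) + y + 0 = x + y + e *: u.
Proof.
move=> <-; rewrite addr0 !scalerDl scaleNr.
set P := a *: u + b *: u; set Q := c *: u.
by rewrite [P + _]addrCA addrAC.
Qed.

Lemma Sug_2 w : Lb 2 (Lb (-2) w) - Lb (-2) (Lb 2 w) =
  4%:R *: Lb 0 w + (2%:R^-1 * (1 - 12%:R * z ^+ 2 / ell)) *: w.
Proof.
set K := maxn (maxn (thr (-2) w) (thr (-2) (Lb 2 w))) (maxn (thr 0 w) (absz (bnd w))).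
rewrite (@Sug_core 2 (-2) 0 w K.+2) //; try by rewrite /K; lia.
rewrite (@LbE 0 w K.+2); last by rewrite /K; lia.
rewrite /Lf np_isum.
set T := fun j => h (0 - j) (h j w).
rewrite (@isum_ext _ _ _ (fun k => (- k)%:~R *: h (-2 - k) (h (2 + k) w))
   (fun k => (fun j => (2 - j)%:~R *: T j) (k + 2))); last first.
  move=> k _ _ /=; rewrite /T.
  have -> : 2 - (k + 2) = - k by lia.
  have -> : 0 - (k + 2) = -2 - k by lia.
  by rewrite (addrC k 2).
rewrite (@isum_shift _ _ _ 2 (fun j => (2 - j)%:~R *: T j)).
rewrite (@isum_ext _ _ _ (fun k => (k - -2)%:~R *: h (0 - k) (h k w)) (fun k => (k - -2)%:~R *: T k)) //.
rewrite split_W split_W2 split_W.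
have Tneg : forall k, k < 0 -> T k = nord h 0 k w - (k%:~R * ell) *: w.
  move=> k k0; rewrite /T /nord ifF; last by apply/negbTE; lia.
  have := hh k (0 - k) w; have -> : k + (0 - k) = 0 by lia.
  rewrite /delta0 eqxx mulr1 scalerA => <-.
  by rewrite opprB addrCA subrr addr0.
have Tpos : forall k, 0 <= k -> T k = nord h 0 k w.
  by move=> k1 k0; rewrite /T /nord ifT //; lia.
have N1 : nord h 0 (- (K.+2)%:Z) w = 0 by apply: nord_out; rewrite /K; lia.
have N2 : nord h 0 (- (K.+1)%:Z) w = 0 by apply: nord_out; rewrite /K; lia.
rewrite N1 N2 !add0r.
have Z3 : isum (K%:Z + 3) 2 (fun j => (2 - j)%:~R *: T j) = 0.
  apply: isum_zero => k k1 _; rewrite /T (bndP (i := k)) ?h0 ?scaler0 //; rewrite /K in k1; lia.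
rewrite Z3.
set SN := isum (- K%:Z) K (fun k => nord h 0 k w).
set SP := isum 0 (K + 3) (fun k => nord h 0 k w).
have ESN : isum (- K%:Z) K (fun k => (k - -2)%:~R *: T k) + isum (- K%:Z) K (fun j => (2 - j)%:~R *: T j)
   = 4%:R *: (SN - ((- (K%:R * (K%:R + 1) / 2%:R)) * ell) *: w).
  rewrite -isum_add (@isum_ext _ _ _ _ (fun k => 4%:R *: (nord h 0 k w + - (k%:~R * ell) *: w))); last first.
    move=> k _ k2; rewrite -scalerDl Tneg; last lia.
    congr (_ *: _); last by rewrite scaleNr.
    rewrite -intrD; by have -> : k - -2 + (2 - k) = 4 by lia.
  by rewrite isum_scale isum_add isum_scalel isum_opp isum_mulr isum_id scaleNr.
have ESP : isum 0 (K + 3) (fun k => (k - -2)%:~R *: T k) + isum 0 (K + 3) (fun j => (2 - j)%:~R *: T j)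
   = 4%:R *: SP.
  rewrite -isum_add -isum_scale; apply: isum_ext => k k1 _.
  rewrite -scalerDl Tpos; last lia.
  congr (_ *: _); rewrite -intrD; by have -> : k - -2 + (2 - k) = 4 by lia.
rewrite addr0.
have ac4 : forall (fa fb a1 a2 b1 b2 : V),
  fa + fb + a1 + a2 + (b1 + b2) = fa + fb + (a1 + b1) + (a2 + b2).
  by move=> fa fb a1 a2 b1 b2; rewrite -!addrA (addrCA a2 b1).
rewrite ac4 ESN ESP.
rewrite (Tneg (- (K.+2)%:Z)) ?N1; last lia.
rewrite (Tneg (- (K.+1)%:Z)) ?N2; last lia.
rewrite !sub0r !scalerN !scalerA !scalerDr !scalerN !scalerA.
apply: comb_final.
- by rewrite mulrC.
- by rewrite mulrC.
- rewrite /al /gam !(intrD, intrB, intrN, intrM, rmorphXn) -!pmulrn /=; field; done.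
rewrite /al /gam /delta0 eqxx.
have -> : - (K.+2)%:Z - -2 = - K%:Z by lia.
have -> : - (K.+1)%:Z - -2 = 1 - K%:Z by lia.
rewrite !(intrD, intrB, intrN, intrM, rmorphXn) -!pmulrn -!natr1 /=; field; done.
Qed.

Variable d : int -> V -> V.
Variables (c1 c2 c3 : V -> V) (c : C) (nM : int).
Hypothesis dlin : forall m, is_lin (d m).
Hypothesis dh : forall m r v, d m (h r v) - h r (d m v) =
  (- r)%:~R *: h (m + r) v + (delta0 (m + r) * (m ^+ 2 + m)%:~R) *: c2 v.
Hypothesis dd : forall m n v, d m (d n v) - d n (d m v) =
  (m - n)%:~R *: d (m + n) v + (delta0 (m + n) * ((m ^+ 3 - m)%:~R / 12%:R)) *: c1 v.
Hypothesis Hc1 : forall v, c1 v = c *: v.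
Hypothesis Hc2 : forall v, c2 v = z *: v.
Hypothesis Hc3 : forall v, c3 v = ell *: v.

Definition D' m u := d m u - Lb m u.

Lemma D'_lin m : is_lin (D' m).
Proof.
move=> a u v; rewrite /D' dlin (Lb_lin m) scalerBr opprD.
by rewrite addrACA.
Qed.

Lemma D'_h m r u : D' m (h r u) = h r (D' m u).
Proof.
rewrite /D' (linB (hlin r)).
rewrite -[d m (h r u)](subrK (h r (d m u))) dh Hc2 scalerA.
rewrite -[Lb m (h r u)](subrK (h r (Lb m u))) LbA.
by rewrite opprD addrACA subrr add0r.
Qed.

Lemma D'_Lb m n u : D' m (Lb n u) = Lb n (D' m u).
Proof. exact: Lb_comm (D'_lin m) (D'_h m). Qed.

Lemma D'_comm m n w : D' m (D' n w) - D' n (D' m w) =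
  (d m (d n w) - d n (d m w)) - (Lb m (Lb n w) - Lb n (Lb m w)).
Proof.
have Em := D'_Lb m n w; have En := D'_Lb n m w.
rewrite /D' in Em En *.
rewrite (linB (dlin m)) (linB (Lb_lin m)) (linB (dlin n)) (linB (Lb_lin n)).
rewrite (linB (Lb_lin n)) in Em; rewrite (linB (Lb_lin m)) in En.
move/eqP: Em; rewrite subr_eq => /eqP ->.
move/eqP: En; rewrite subr_eq => /eqP ->.
set A := d m (d n w); set B := d n (d m w); set P := Lb m (d n w).
set Q := Lb n (d m w); set R := Lb m (Lb n w); set S := Lb n (Lb m w).
clearbody A B P Q R S.
rewrite !opprD !opprK !addrA.
rewrite [LHS](ACl (1*7*9*10*2*11*3*12*4*6*5*8)) /=.
by rewrite !(subrK, addrK).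
Qed.


Lemma P_isum (P : V -> Prop) a l F : P 0 -> (forall s x y, P x -> P y -> P (s *: x + y)) ->
  (forall k, P (F k)) -> P (isum a l F).
Proof.
move=> P0 Pl PF; elim: l a => [|l IH] a; first by rewrite isum0.
by rewrite isumS -[F a]scale1r; apply: (Pl).
Qed.

Lemma P_Lb (P : V -> Prop) : P 0 -> (forall s x y, P x -> P y -> P (s *: x + y)) ->
  (forall r x, P x -> P (h r x)) -> forall m u, P u -> P (Lb m u).
Proof.
move=> P0 Pl Ph m u Pu; rewrite /Lb /Lf np_isum.
apply: (Pl); last by rewrite -[_ *: h m u]addr0; apply: (Pl) => //; apply: (Ph).
apply: P_isum => // k; rewrite /nord; case: ifP => _; by apply: (Ph); apply: (Ph).
Qed.

Lemma inK_scale a u : inK d h ell z nM u -> inK d h ell z nM (a *: u).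
Proof. by move=> Hu; rewrite -[a *: u]addr0; apply: inK_lin => //; apply: inK_zero. Qed.

Lemma inK_add u v : inK d h ell z nM u -> inK d h ell z nM v -> inK d h ell z nM (u + v).
Proof. by move=> Hu Hv; rewrite -[u]scale1r; apply: inK_lin. Qed.

Lemma inK_Lb m u : inK d h ell z nM u -> inK d h ell z nM (Lb m u).
Proof.
apply: P_Lb; [exact: inK_zero | exact: inK_lin | exact: inK_h].
Qed.

Lemma K0_d m u : K0 d h ell z nM u -> d m u = Lb m u.
Proof. move=> Hu; have [_ H] := Hu m; apply: Lb_uniq; apply: H; lia. Qed.

Lemma inK_d u : inK d h ell z nM u -> forall m, inK d h ell z nM (d m u).
Proof.
elim=> [w Hw|| r v Hv IH | a u1 v Hu IHu Hv IHv] m.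
- by rewrite (K0_d m Hw); apply: inK_Lb; apply: inK_K0.
- by rewrite (lin0 (dlin m)); apply: inK_zero.
- rewrite -[d m (h r v)](subrK (h r (d m v))) dh Hc2.
  apply: inK_add; last by apply: inK_h.
  by apply: inK_add; apply: inK_scale; [apply: inK_h | apply: inK_scale].
- by rewrite dlin; apply: inK_lin.
Qed.

Lemma cz_ne : (12%:R : C) != 0.
Proof. by rewrite pnatr_eq0. Qed.

Lemma main_sec :
  Dbar_simple d h c1 c2 c3 -> rM_minus_infty d h ell z nM ->
    (forall v, inK d h ell z nM v) /\
    (forall v, c1 v = (1 - 12%:R * z ^+ 2 / ell) *: v) /\
    (forall v, c2 v = z *: v) /\
    (forall (n : int) v, Lbar_rel h ell z n v (d n v)) /\
    c = 1 - 12%:R * z ^+ 2 / ell /\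
    hbar_simple h c3 (inK d h ell z nM).
Proof.
move=> [_ Hsimple] HrM.
have [v0 [[Mv0 Yv0] v0nz]] := HrM (-2).
have D0 : forall p, -2 <= p -> D' p v0 = 0.
  by move=> p hp; rewrite /D' -(Lb_uniq (Yv0 p hp)) subrr.
have Dk : forall k : nat, D' (-2 - k%:Z) v0 = 0.
  elim=> [|k IH]; first by apply: D0; lia.
  have := D'_comm (-1) (-2 - k%:Z) v0.
  rewrite IH (D0 (-1)) // !(lin0 (D'_lin _)) subrr.
  rewrite dd Sug_p; last by apply/eqP; lia.
    2: by apply/eqP; lia.
  rewrite /delta0 ifN; last by apply/eqP; lia.
  rewrite mul0r scale0r addr0 -scalerBr => /esym/eqP; rewrite scaler_eq0 => /orP[].
    by rewrite intr_eq0 => /eqP; lia.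
  by move=> /eqP; have -> : -1 + (-2 - k%:Z) = -2 - k.+1%:Z by lia.
have Dall : forall p, D' p v0 = 0.
  move=> p; case: (lerP (-2) p) => hp; first exact: D0.
  by have -> : p = -2 - (absz ((-2 - p)%R))%:Z by lia.
have dL : forall p, d p v0 = Lb p v0 by move=> p; apply/eqP; rewrite -subr_eq0; apply/eqP; exact: Dall.
have Hc : c = 1 - 12%:R * z ^+ 2 / ell.
  have := D'_comm 2 (-2) v0; rewrite !Dall !(lin0 (D'_lin _)) subrr dd Sug_2.
  have -> : (2 : int) + -2 = 0 by [].
  rewrite dL Hc1 /delta0 eqxx mul1r; move: (Lb 0 v0) => L0.
  have -> : ((2 - -2)%:~R : C) = 4%:R by rewrite -pmulrn.
  move/esym/eqP; rewrite subr_eq0 => /eqP /addrI; rewrite scalerA => /eqP.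
  rewrite -subr_eq0 -scalerBl scaler_eq0 (negbTE v0nz) orbF.
  have -> : ((2 ^+ 3 - 2)%:~R / 12%:R : C) = 2%:R^-1.
    by rewrite !(intrD, intrB, intrN, intrM, rmorphXn) -!pmulrn /=; field.
  rewrite -mulrBr mulf_eq0 invr_eq0 pnatr_eq0 /= subr_eq0 => /eqP.
  by [].
have K0v0 : K0 d h ell z nM v0.
  by move=> n; split => // p _; rewrite dL; apply: Lb_rel.
have Ksub : Dbar_submodule d h c1 c2 c3 (inK d h ell z nM).
  split; [exact: inK_zero | exact: inK_lin | by move=> m v Hv; apply: inK_d | exact: inK_h |].
  by move=> v Hv; rewrite Hc1 Hc2 Hc3; split; [|split]; apply: inK_scale.
have Kall : forall v, inK d h ell z nM v.
  case: (Hsimple _ Ksub) => // H.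
  by have := H v0 (inK_K0 K0v0) => E; rewrite E eqxx in v0nz.
have Dz : forall n u, D' n u = 0.
  move=> n u; elim: (Kall u) => [w Hw|| r v _ IH | a u1 v _ IH1 _ IH2].
  - by rewrite /D' (K0_d n Hw) subrr.
  - exact: lin0 (D'_lin n).
  - by rewrite D'_h IH h0.
  - by rewrite D'_lin IH1 IH2 scaler0 addr0.
have dLall : forall n u, d n u = Lb n u.
  by move=> n u; apply/eqP; rewrite -subr_eq0; apply/eqP; exact: Dz.
split; first exact: Kall.
split; first by move=> v; rewrite Hc1 Hc.
split; first exact: Hc2.
split; first by move=> n v; rewrite dLall; apply: Lb_rel.
split; first exact: Hc.
split.
  split; [exact: inK_zero | exact: inK_lin | exact: inK_h |].
  by move=> v Hv; rewrite Hc3; apply: inK_scale.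
split; first by exists v0; split => //; apply: inK_K0.
move=> P [P0 Pl Ph Pc3] _.
have PD : Dbar_submodule d h c1 c2 c3 P.
  split => //.
  - by move=> m v Pv; rewrite dLall; apply: P_Lb.
  - move=> v Pv; rewrite Hc1 Hc2; split; [|split].
    + by rewrite -[_ *: v]addr0; apply: (Pl).
    + by rewrite -[_ *: v]addr0; apply: (Pl).
    + exact: Pc3.
case: (Hsimple _ PD) => H; first by left.
by right => v _; apply: H.
Qed.

End H.

Unset Implicit Arguments.

Theorem proposition5p4 (V : lmodType C)
    (d h : int -> V -> V) (c1 c2 c3 : V -> V)
    (c ell zM : C) (nM : int) :
  is_Dbar_module d h c1 c2 c3 ->
  restricted d h ->
  Dbar_simple d h c1 c2 c3 ->
  (forall v, c1 v = c *: v) ->          (* central charge c *)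
  (forall v, c3 v = ell *: v) ->        (* level ell *)
  ell != 0 ->
  (forall v, c2 v = zM *: v) ->         (* zM = scalar of \bar c_2 on M *)
  is_nM h nM ->                         (* nM = n_M *)
  rM_minus_infty d h ell zM nM ->       (* r_M = -infinity *)
  exists z : C,
    (* M = K(z)^{\bar D}: K = M ... *)
    (forall v, inK d h ell zM nM v) /\
    (* ... and the \bar D-action is the one defining K(z)^{\bar D} *)
    (forall v, c1 v = (1 - 12%:R * z ^+ 2 / ell) *: v) /\
    (forall v, c2 v = z *: v) /\
    (forall (n : int) v, Lbar_rel h ell z n v (d n v)) /\
    (* hence c = 1 - 12 z^2 / ell and K is a simple \bar h-module *)
    c = 1 - 12%:R * z ^+ 2 / ell /\
    hbar_simple h c3 (inK d h ell zM nM).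
Proof.
move=> [[dlin [hlin _]] dd dh hh _] Hres Hsimp Hc1 Hc3 ell0 Hc2 _ HrM.
exists zM.
pose bnd v := proj1_sig (constructive_indefinite_description _ (Hres v)).
have bndP : forall u i, bnd u <= i -> h i u = 0.
  by move=> u i H; exact: ((proj2_sig (constructive_indefinite_description _ (Hres u))) i H).2.
have hh' : forall r s v, h r (h s v) - h s (h r v) = (r%:~R * delta0 (r + s)) *: (ell *: v).
  by move=> r s v; rewrite hh Hc3.
exact: (main_sec hlin hh' ell0 bndP dlin dh dd Hc1 Hc2 Hc3 Hsimp HrM).
Qed.
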